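(* Let $L$ be a countable C-lattice domain in which every element is a join of principal elements. If $L$ is sharp, then $L$ is a Dedekind lattice, i.e. every element of $L$ is principal.
   Context: A multiplicative lattice is a complete lattice $(L,\le)$ with bottom $0$ and top $1$ which is also a commutative monoid with identity $1$ such that $a(\bigvee_\alpha b_\alpha)=\bigvee_\alpha(ab_\alpha)$ for all $a,b_\alpha\in L$. For $x,y\in L$, $(y:x)=\bigvee\{a\in L: ax\le y\}$. An element $c$ is compact if $c\le\bigvee S$ implies $c\le\bigvee T$ for some finite $T\subseteq S$. A C-lattice is a multiplicative lattice in which $1$ is compact, the product of two compact elements is compact, and every element is a join of compact elements. A proper element $p\ne1$ is prime if $xy\le p$ implies $x\le p$ or $y\le p$; $L$ is a domain if $0$ is prime. An element $x$ is principal if $y\wedge zx=((y:x)\wedge z)x$ and $y\vee(z:x)=((yx\vee z):x)$ for all $y,z\in L$. $L$ is sharp if whenever $a_1a_2\le b$ with $a_1,a_2,b\in L$, there exist $b_1,b_2\in L$ with $a_i\le b_i$ ($i=1,2$) and $b=b_1b_2$. *)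

(* Defs.v *)
From Stdlib Require Import List.

Record MultLattice := {
  car :> Type;
  le : car -> car -> Prop;
  bigjoin : (car -> Prop) -> car;
  mul : car -> car -> car;
  one : car;
  le_refl : forall x, le x x;
  le_trans : forall x y z, le x y -> le y z -> le x z;
  le_antisym : forall x y, le x y -> le y x -> x = y;
  bigjoin_ub : forall (S : car -> Prop) x, S x -> le x (bigjoin S);
  bigjoin_least : forall (S : car -> Prop) u,
      (forall x, S x -> le x u) -> le (bigjoin S) u;
  one_top : forall x, le x one;
  mulC : forall x y, mul x y = mul y x;
  mulA : forall x y z, mul x (mul y z) = mul (mul x y) z;
  mul1 : forall x, mul x one = x;
  mul_bigjoin : forall a (S : car -> Prop),
      mul a (bigjoin S) = bigjoin (fun y => exists b, S b /\ y = mul a b)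
}.

Arguments le {L} : rename.
Arguments bigjoin {L} : rename.
Arguments mul {L} : rename.
Arguments one {L} : rename.

Section Defs.
Variable L : MultLattice.

Definition zero : L := bigjoin (fun _ => False).
Definition join (x y : L) : L := bigjoin (fun z => z = x \/ z = y).
Definition meet (x y : L) : L := bigjoin (fun a => le a x /\ le a y).
Definition colon (y x : L) : L := bigjoin (fun a => le (mul a x) y).

Definition compact (c : L) : Prop :=
  forall S : L -> Prop, le c (bigjoin S) ->
    exists T : list L, (forall t, In t T -> S t) /\ le c (bigjoin (fun t => In t T)).

Definition is_C_lattice : Prop :=
  compact one /\
  (forall a b, compact a -> compact b -> compact (mul a b)) /\
  (forall x : L, exists S : L -> Prop,
      (forall c, S c -> compact c) /\ x = bigjoin S).

Definition prime (p : L) : Prop :=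
  p <> one /\ forall x y, le (mul x y) p -> le x p \/ le y p.

Definition is_domain : Prop := prime zero.

Definition principal (x : L) : Prop :=
  forall y z : L,
    meet y (mul z x) = mul (meet (colon y x) z) x /\
    join y (colon z x) = colon (join (mul y x) z) x.

Definition sharp : Prop :=
  forall a1 a2 b : L, le (mul a1 a2) b ->
    exists b1 b2, le a1 b1 /\ le a2 b2 /\ b = mul b1 b2.

Definition countable_lattice : Prop :=
  exists f : L -> nat, forall x y, f x = f y -> x = y.

Definition principally_generated : Prop :=
  forall x : L, exists S : L -> Prop,
    (forall p, S p -> principal p) /\ x = bigjoin S.

Definition dedekind_lattice : Prop := forall x : L, principal x.

End Defs.

(* Main.v *)
Require Import Defs.
From Stdlib Require Import List Classical ClassicalEpsilon FunctionalExtensionality Lia.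

Section Basics.
Context {L : MultLattice}.

Lemma bj_ext (S T : L -> Prop) : (forall x, S x <-> T x) -> bigjoin S = bigjoin T.
Proof.
  intros H. apply le_antisym; apply bigjoin_least; intros x Hx;
  apply bigjoin_ub; apply H; auto.
Qed.

Lemma le_tr (x y z : L) : le x y -> le y z -> le x z.
Proof. apply le_trans. Qed.

Lemma zero_le (x : L) : le (zero L) x.
Proof. unfold zero. apply bigjoin_least. intros _ []. Qed.

Lemma le_zero (x : L) : le x (zero L) -> x = zero L.
Proof. intros H. apply le_antisym; auto using zero_le. Qed.

Lemma join_l (x y : L) : le x (join L x y).
Proof. unfold join. apply bigjoin_ub. auto. Qed.
Lemma join_r (x y : L) : le y (join L x y).
Proof. unfold join. apply bigjoin_ub. auto. Qed.
Lemma join_lub (x y u : L) : le x u -> le y u -> le (join L x y) u.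
Proof. intros. unfold join. apply bigjoin_least. intros z [->| ->]; auto. Qed.
Lemma join_mono (x y x' y' : L) : le x x' -> le y y' -> le (join L x y) (join L x' y').
Proof. intros. apply join_lub. eapply le_tr. eauto. apply join_l. eapply le_tr. eauto. apply join_r. Qed.
Lemma join_zero_r (x : L) : join L x (zero L) = x.
Proof. apply le_antisym. apply join_lub; auto using le_refl, zero_le. apply join_l. Qed.
Lemma join_zero_l (x : L) : join L (zero L) x = x.
Proof. apply le_antisym. apply join_lub; auto using le_refl, zero_le. apply join_r. Qed.
Lemma join_eq_r (x y : L) : le x y -> join L x y = y.
Proof. intros. apply le_antisym. apply join_lub; auto using le_refl. apply join_r. Qed.
Lemma join_comm (x y : L) : join L x y = join L y x.
Proof. apply le_antisym; apply join_lub; auto using join_l, join_r. Qed.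

Lemma meet_l (x y : L) : le (meet L x y) x.
Proof. unfold meet. apply bigjoin_least. intros a [H _]; auto. Qed.
Lemma meet_r (x y : L) : le (meet L x y) y.
Proof. unfold meet. apply bigjoin_least. intros a [_ H]; auto. Qed.
Lemma meet_glb (x y u : L) : le u x -> le u y -> le u (meet L x y).
Proof. intros. unfold meet. apply bigjoin_ub. auto. Qed.
Lemma meet_eq_l (x y : L) : le x y -> meet L x y = x.
Proof. intros. apply le_antisym. apply meet_l. apply meet_glb; auto using le_refl. Qed.
Lemma meet_one (x : L) : meet L x one = x.
Proof. apply meet_eq_l. apply one_top. Qed.
Lemma meet_mono (x y x' y' : L) : le x x' -> le y y' -> le (meet L x y) (meet L x' y').
Proof. intros. apply meet_glb. eapply le_tr. apply meet_l. auto. eapply le_tr. apply meet_r. auto. Qed.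

Lemma mul1l (x : L) : mul one x = x.
Proof. rewrite mulC. apply mul1. Qed.

Lemma mul_join (c a b : L) : mul c (join L a b) = join L (mul c a) (mul c b).
Proof.
  unfold join. rewrite mul_bigjoin. apply bj_ext. intros y. split.
  - intros [b0 [[-> | ->] ->]]; auto.
  - intros [-> | ->]; eauto.
Qed.
Lemma mul_join_l (a b c : L) : mul (join L a b) c = join L (mul a c) (mul b c).
Proof. rewrite mulC, mul_join, (mulC _ c a), (mulC _ c b). reflexivity. Qed.

Lemma mul_mono_r (c a b : L) : le a b -> le (mul c a) (mul c b).
Proof.
  intros H. rewrite <- (join_eq_r a b H). rewrite mul_join. apply join_l.
Qed.
Lemma mul_mono_l (c a b : L) : le a b -> le (mul a c) (mul b c).
Proof. intros. rewrite (mulC _ a), (mulC _ b). apply mul_mono_r; auto. Qed.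
Lemma mul_mono (a b a' b' : L) : le a a' -> le b b' -> le (mul a b) (mul a' b').
Proof. intros. eapply le_tr. apply mul_mono_l; eauto. apply mul_mono_r; auto. Qed.
Lemma mul_le_l (a b : L) : le (mul a b) a.
Proof. rewrite <- (mul1 _ a) at 2. apply mul_mono_r. apply one_top. Qed.
Lemma mul_le_r (a b : L) : le (mul a b) b.
Proof. rewrite mulC. apply mul_le_l. Qed.
Lemma mul_zero (x : L) : mul x (zero L) = zero L.
Proof. apply le_zero. apply mul_le_r. Qed.
Lemma mul_zero_l (x : L) : mul (zero L) x = zero L.
Proof. apply le_zero. apply mul_le_l. Qed.

Lemma colon_ub (y x a : L) : le (mul a x) y -> le a (colon L y x).
Proof. intros. unfold colon. apply bigjoin_ub. auto. Qed.
Lemma colon_mul (y x : L) : le (mul (colon L y x) x) y.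
Proof.
  unfold colon. rewrite mulC, mul_bigjoin. apply bigjoin_least.
  intros z [b [Hb ->]]. rewrite mulC. auto.
Qed.
Lemma colon_iff (y x a : L) : le a (colon L y x) <-> le (mul a x) y.
Proof.
  split; intros H. eapply le_tr. apply mul_mono_l. eauto. apply colon_mul.
  apply colon_ub; auto.
Qed.
Lemma colon_mono (y y' x : L) : le y y' -> le (colon L y x) (colon L y' x).
Proof. intros. apply colon_ub. eapply le_tr. apply colon_mul. auto. Qed.
Lemma colon_anti (y x x' : L) : le x x' -> le (colon L y x') (colon L y x).
Proof. intros. apply colon_ub. eapply le_tr. apply mul_mono_r. eauto. apply colon_mul. Qed.
Lemma colon_ge (y x : L) : le y (colon L y x).
Proof. apply colon_ub. apply mul_le_l. Qed.
Lemma colon_one_eq (y x : L) : le x y -> colon L y x = one.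
Proof. intros. apply le_antisym. apply one_top. apply colon_ub. rewrite mul1l. auto. Qed.
Lemma colon_colon (y x w : L) : colon L (colon L y w) x = colon L y (mul x w).
Proof.
  apply le_antisym.
  - apply colon_ub. rewrite mulA. apply (proj1 (colon_iff _ _ _)). apply (proj1 (colon_iff _ _ _)). apply le_refl.
  - apply colon_ub. apply colon_ub. rewrite <- mulA. apply colon_mul.
Qed.

End Basics.

Section Princ.
Context {L : MultLattice}.
Context (Hdom : is_domain L).

Lemma principal_one : principal L one.
Proof.
  intros y z. rewrite !mul1. split.
  - f_equal. apply le_antisym. apply colon_ub. rewrite mul1. apply le_refl.
    rewrite <- (mul1 _ (colon L y one)). apply colon_mul.
  - assert (E: forall w, colon L w one = w).
    { intros w. apply le_antisym. rewrite <- (mul1 _ (colon L w one)). apply colon_mul.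
      apply colon_ub. rewrite mul1. apply le_refl. }
    rewrite !E. reflexivity.
Qed.

Lemma principal_zero : principal L (zero L).
Proof.
  intros y z. rewrite !mul_zero. split.
  - apply le_antisym. apply meet_r. apply zero_le.
  - rewrite !colon_one_eq by apply zero_le. apply le_antisym. apply one_top. apply join_r.
Qed.

Lemma P_meet (x a : L) : principal L x -> le a x -> a = mul (colon L a x) x.
Proof.
  intros Hx Ha. destruct (Hx a one) as [H _]. rewrite mul1l, meet_one in H.
  rewrite <- H. symmetry. apply meet_eq_l. auto.
Qed.

Lemma P_join (x y z : L) : principal L x -> colon L (join L (mul y x) z) x = join L y (colon L z x).
Proof. intros Hx. destruct (Hx y z) as [_ H]. auto. Qed.

Lemma one_ne_zero : one <> zero L.
Proof. destruct Hdom as [H _]. auto. Qed.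

Lemma dom_mul (a b : L) : le (mul a b) (zero L) -> a = zero L \/ b = zero L.
Proof. intros H. destruct Hdom as [_ H2]. destruct (H2 a b H); [left|right]; apply le_zero; auto. Qed.

Lemma mul_ne0 (a b : L) : a <> zero L -> b <> zero L -> mul a b <> zero L.
Proof. intros Ha Hb E. destruct (dom_mul a b); auto. rewrite E. apply le_refl. Qed.

Lemma colon_zero (x : L) : x <> zero L -> colon L (zero L) x = zero L.
Proof.
  intros Hx. apply le_zero. apply bigjoin_least. intros t Ht.
  destruct (dom_mul t x Ht) as [->| ->]. apply le_refl. congruence.
Qed.

Lemma cancel (x a b : L) : principal L x -> x <> zero L -> le (mul a x) (mul b x) -> le a b.
Proof.
  intros Hx Hx0 H. pose proof (P_join x b (zero L) Hx) as E.
  rewrite join_zero_r, colon_zero, join_zero_r in E by auto.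
  rewrite <- E. apply colon_ub. auto.
Qed.

Lemma cancel_eq (x a b : L) : principal L x -> x <> zero L -> mul a x = mul b x -> a = b.
Proof. intros. apply le_antisym; eapply cancel; eauto; rewrite H1; apply le_refl. Qed.

Lemma principal_mul (x w : L) : principal L x -> principal L w -> principal L (mul x w).
Proof.
  intros Hx Hw y z. split.
  - rewrite mulA. destruct (Hw y (mul z x)) as [H1 _]. rewrite H1.
    destruct (Hx (colon L y w) z) as [H2 _]. rewrite H2. rewrite colon_colon.
    rewrite mulA. reflexivity.
  - rewrite <- colon_colon. rewrite <- (P_join x) by auto.
    rewrite <- (P_join w) by auto. rewrite colon_colon. rewrite (mulA _ y x w). reflexivity.
Qed.

Lemma factor (x a b : L) : principal L x -> x <> zero L -> x = mul a b -> principal L a.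
Proof.
  intros Hx Hx0 E.
  assert (Cb : forall u v, le (mul u b) (mul v b) -> le u v).
  { intros u v H. apply (cancel x); auto. rewrite E, !mulA, (mulC _ u a), (mulC _ v a), <- !mulA.
    apply mul_mono_r. auto. }
  intros w z. split.
  - apply le_antisym.
    + set (M := meet L w (mul z a)).
      assert (H1 : le (mul M b) (meet L (mul w b) (mul z x))).
      { apply meet_glb. apply mul_mono_l. apply meet_l.
        rewrite E, mulA. apply mul_mono_l. apply meet_r. }
      destruct (Hx (mul w b) z) as [H2 _]. rewrite H2 in H1.
      apply Cb. eapply le_tr. apply H1. rewrite E, mulA. apply mul_mono_l. apply mul_mono_l.
      apply meet_mono; [|apply le_refl].
      apply colon_ub. apply Cb. rewrite <- mulA, <- E. apply colon_mul.
    + apply meet_glb. eapply le_tr. apply mul_mono_l. apply meet_l. apply colon_mul.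
      apply mul_mono_l. apply meet_r.
  - apply le_antisym.
    + apply join_lub. apply colon_ub. apply join_l.
      apply colon_mono. apply join_r.
    + apply bigjoin_least. intros t Ht.
      assert (H1 : le (mul t x) (join L (mul w x) (mul z b))).
      { rewrite E, mulA. rewrite (mulA _ w). rewrite <- mul_join_l. apply mul_mono_l. auto. }
      eapply le_tr. apply colon_ub. apply H1. rewrite (P_join x) by auto.
      apply join_mono. apply le_refl. apply colon_ub. apply Cb.
      rewrite <- mulA, <- E. apply colon_mul.
Qed.

End Princ.

Section Pruf.
Context {L : MultLattice}.
Context (Hdom : is_domain L).
Hypothesis HC : is_C_lattice L.
Hypothesis Hsh : sharp L.

Definition FJ (T : list L) : L := bigjoin (fun t => In t T).

Lemma FJ_incl (T T' : list L) : incl T T' -> le (FJ T) (FJ T').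
Proof. intros H. apply bigjoin_least. intros t Ht. apply bigjoin_ub. auto. Qed.

Lemma FJ_ub (T : list L) t : In t T -> le t (FJ T).
Proof. intros. apply bigjoin_ub. auto. Qed.

Lemma principal_compact (p : L) : principal L p -> compact L p.
Proof.
  intros Hp. destruct (classic (p = zero L)) as [E|Hp0].
  { subst. intros S _. exists nil. split. intros t Ht; simpl in Ht; contradiction. apply zero_le. }
  intros S HS.
  set (W := bigjoin (fun y => exists T, (forall t, In t T -> S t) /\ y = colon L (FJ T) p)).
  assert (HW : le p (mul W p)).
  { destruct HC as [_ [_ Hgen]]. destruct (Hgen p) as [K [HK Ep]].
    rewrite Ep at 1. apply bigjoin_least. intros k Hk.
    assert (kp : le k p) by (rewrite Ep; apply bigjoin_ub; auto).
    destruct (HK k Hk S (le_tr _ _ _ kp HS)) as [T [HT HkT]].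
    apply le_tr with (mul (colon L (FJ T) p) p).
    - destruct (Hp (FJ T) one) as [H _]. rewrite mul1l, meet_one in H. rewrite <- H.
      apply meet_glb; auto.
    - apply mul_mono_l. apply bigjoin_ub. exists T. auto. }
  assert (HW1 : le one W).
  { apply (cancel Hdom p); auto. rewrite mul1l. auto. }
  destruct HC as [Hone _]. unfold W in HW1. unfold compact in Hone. destruct (Hone _ HW1) as [L2 [HL2 H1]].
  assert (Hcol : forall L2 : list L, (forall y, In y L2 -> exists T, (forall t, In t T -> S t) /\ y = colon L (FJ T) p) ->
     exists T, (forall t, In t T -> S t) /\ forall y, In y L2 -> le y (colon L (FJ T) p)).
  { intros L0; induction L0 as [|y L3 IH]; intros H.
    - exists nil. split. intros t Ht; simpl in Ht; contradiction. intros y Hy; simpl in Hy; contradiction.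
    - destruct (H y (or_introl eq_refl)) as [T1 [HT1 ->]].
      destruct IH as [T2 [HT2 H2]]. { intros y' Hy'. apply H. right. auto. }
      exists (T1 ++ T2). split.
      + intros t Ht. apply in_app_or in Ht. destruct Ht; auto.
      + intros y' [<-|Hy'].
        * apply colon_mono. apply FJ_incl. intros t Ht. apply in_or_app. auto.
        * eapply le_tr. apply H2; auto. apply colon_mono. apply FJ_incl. intros t Ht. apply in_or_app. auto. }
  destruct (Hcol L2 HL2) as [T [HT HT2]].
  exists T. split; auto.
  assert (le one (colon L (FJ T) p)).
  { eapply le_tr. apply H1. apply bigjoin_least. auto. }
  rewrite <- (mul1l p). apply colon_iff. auto.
Qed.

Lemma least_principal (a x0 : L) : principal L x0 -> x0 <> zero L -> le x0 a ->
  exists b1, principal L b1 /\ b1 <> zero L /\ le a b1 /\ forall z, principal L z -> le a z -> le b1 z.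
Proof.
  intros Hx0 Hx00 Hxa.
  destruct (Hsh a (colon L x0 a) x0) as [b1 [b2 [H1 [H2 E]]]].
  { rewrite mulC. apply colon_mul. }
  assert (Hb1 : principal L b1) by (apply (factor Hdom x0 b1 b2); auto).
  assert (Hb2 : principal L b2) by (apply (factor Hdom x0 b2 b1); auto; rewrite mulC; auto).
  assert (Hb20 : b2 <> zero L) by (intros ->; apply Hx00; rewrite E; apply mul_zero).
  exists b1. refine (conj Hb1 (conj _ (conj H1 _))).
  - intros ->. apply Hx00. rewrite E. apply mul_zero_l.
  - intros z Hz Haz.
    assert (Hxz : le x0 z) by (eapply le_tr; eauto).
    apply (cancel Hdom b2); auto. rewrite <- E. rewrite (P_meet z x0) by auto.
    rewrite (mulC _ z b2). apply mul_mono_l. eapply le_tr. apply colon_anti. apply Haz. auto.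
Qed.

Lemma prufer (p q : L) : principal L p -> principal L q -> principal L (join L p q).
Proof.
  intros Hp Hq.
  destruct (classic (p = zero L)) as [->|Hp0]. { rewrite join_zero_l. auto. }
  destruct (classic (q = zero L)) as [->|Hq0]. { rewrite join_zero_r. auto. }
  destruct (least_principal (join L p q) p Hp Hp0 (join_l p q)) as [b1 [Hb1 [Hb10 [Hab1 Hleast]]]].
  set (p' := colon L p b1). set (q' := colon L q b1).
  assert (Ep : p = mul p' b1) by (apply P_meet; auto; eapply le_tr; [apply join_l|eauto]).
  assert (Eq : q = mul q' b1) by (apply P_meet; auto; eapply le_tr; [apply join_r|eauto]).
  assert (Hp' : principal L p') by (apply (factor Hdom p p' b1); auto).
  assert (Hq' : principal L q') by (apply (factor Hdom q q' b1); auto).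
  assert (Hp'0 : p' <> zero L) by (intros E; apply Hp0; rewrite Ep, E; apply mul_zero_l).
  assert (Hq'0 : q' <> zero L) by (intros E; apply Hq0; rewrite Eq, E; apply mul_zero_l).
  set (c := join L p' q').
  assert (Ea : mul c b1 = join L p q) by (unfold c; rewrite mul_join_l, <- Ep, <- Eq; reflexivity).
  assert (HU : forall z, principal L z -> le c z -> z = one).
  { intros z Hz Hcz. apply le_antisym. apply one_top.
    assert (le b1 (mul b1 z)).
    { apply Hleast. apply principal_mul; auto. rewrite <- Ea, mulC. apply mul_mono_r. auto. }
    apply (cancel Hdom b1); auto. rewrite mul1l, mulC. auto. }
  assert (Hcol : forall u v, principal L u -> u <> zero L -> le c (join L v u) -> le (colon L u v) u).
  { intros u v Hu Hu0 Hvc.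
    destruct (Hsh (colon L u v) v u (colon_mul u v)) as [be1 [be2 [Hbe1 [Hbe2 Eu]]]].
    assert (Hbe2p : principal L be2) by (apply (factor Hdom u be2 be1); auto; rewrite mulC; auto).
    assert (E1 : be2 = one).
    { apply HU; auto. eapply le_tr. apply Hvc. apply join_lub; auto.
      rewrite Eu. apply mul_le_r. }
    eapply le_tr. apply Hbe1. rewrite Eu, E1, mul1. apply le_refl. }
  assert (Hqp : le (colon L q' p') q') by (apply Hcol; auto; apply le_refl).
  assert (Hpq : le (colon L p' q') p') by (apply Hcol; auto; unfold c; rewrite join_comm; apply le_refl).
  set (A := join L (mul p' p') q').
  assert (HccA : le (mul c c) A).
  { unfold c, A. rewrite mul_join_l, !mul_join. repeat apply join_lub.
    - apply join_l.
    - eapply le_tr. apply mul_le_r. apply join_r.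
    - eapply le_tr. apply mul_le_l. apply join_r.
    - eapply le_tr. apply mul_le_l. apply join_r. }
  destruct (Hsh c c A HccA) as [B' [C' [HB' [HC' EA]]]].
  assert (HAp : le (colon L A p') c).
  { unfold A. rewrite (P_join p' p' q' Hp'). apply join_mono. apply le_refl. auto. }
  assert (HC'c : le C' c).
  { eapply le_tr; [|apply HAp]. apply colon_ub. rewrite EA, mulC. apply mul_mono_l.
    eapply le_tr; [|apply HB']. apply join_l. }
  assert (HB'c : le B' c).
  { eapply le_tr; [|apply HAp]. apply colon_ub. rewrite EA. apply mul_mono_r.
    eapply le_tr; [|apply HC']. apply join_l. }
  assert (Hq'cc : le q' (join L (mul q' q') (mul p' c))).
  { eapply le_tr. apply (join_r (mul p' p') q'). fold A. rewrite EA.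
    eapply le_tr. apply mul_mono; eauto.
    unfold c at 1. rewrite mul_join_l. apply join_lub. apply join_r.
    unfold c. rewrite mul_join. apply join_lub.
    - eapply le_tr; [|apply join_r]. rewrite mulC. apply mul_mono_r. apply join_r.
    - apply join_l. }
  assert (Hc1 : c = one).
  { apply le_antisym. apply one_top.
    assert (H1 : le one (colon L (join L (mul q' q') (mul p' c)) q')).
    { apply colon_ub. rewrite mul1l. auto. }
    rewrite (P_join q' q' (mul p' c) Hq') in H1.
    eapply le_tr. apply H1. apply join_lub. unfold c; apply join_r.
    eapply le_tr; [|eapply le_tr; [apply Hpq| unfold c; apply join_l]]. apply colon_mono. apply mul_le_l. }
  rewrite <- Ea, Hc1, mul1l. auto.
Qed.

End Pruf.

Lemma cantor (h : (nat -> bool) -> nat) : (forall s t, h s = h t -> s = t) -> False.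
Proof.
  intros Hinj.
  set (g := fun n => epsilon (inhabits (fun _ : nat => false)) (fun s => exists t, h t = n /\ s = t)).
  assert (Hg : forall s, g (h s) = s).
  { intros s. unfold g. destruct (epsilon_spec (inhabits (fun _ : nat => false))
        (fun s0 => exists t, h t = h s /\ s0 = t)) as [t [Ht E]]. eauto.
    rewrite E. apply Hinj; auto. }
  set (d := fun n => negb (g n n)).
  pose proof (Hg d) as E. assert (E2 : d (h d) = g (h d) (h d)) by (rewrite E; reflexivity).
  unfold d in E2 at 1. destruct (g (h d) (h d)); discriminate.
Qed.

Section Main.
Context {L : MultLattice} (Hdom : is_domain L) (HC : is_C_lattice L) (Hsh : sharp L)
  (Hpg : principally_generated L) (f : L -> nat) (Hf : forall x y, f x = f y -> x = y).

Lemma pg_max (x : L) : x = bigjoin (fun p => principal L p /\ le p x).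
Proof.
  destruct (Hpg x) as [S [HS Ex]]. apply le_antisym.
  - rewrite Ex at 1. apply bigjoin_least. intros p Hp. apply bigjoin_ub. split; auto.
    rewrite Ex. apply bigjoin_ub. auto.
  - apply bigjoin_least. intros p [_ H]. auto.
Qed.

Lemma nonzero_principal (x : L) : x <> zero L -> exists p, principal L p /\ p <> zero L /\ le p x.
Proof.
  intros Hx. apply NNPP. intros Hn. apply Hx. apply le_zero. rewrite (pg_max x) at 1.
  apply bigjoin_least. intros p [Hp Hpx]. destruct (classic (p = zero L)) as [->|Hp0].
  apply le_refl. exfalso. apply Hn. eauto.
Qed.

Lemma list_bound (s : nat -> L) (Y : L) (Hs : forall n k, n <= k -> le (s n) (s k)) (T : list L) :
  (forall t, In t T -> t = Y \/ exists n, t = s n) -> exists N, le (FJ T) (join L Y (s N)).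
Proof.
  induction T as [|a T IH]; intros H.
  - exists 0. apply bigjoin_least. intros t Ht; simpl in Ht; contradiction.
  - destruct IH as [N HN]. { intros t Ht. apply H. right. auto. }
    destruct (H a (or_introl eq_refl)) as [->|[n ->]].
    + exists N. apply bigjoin_least. intros t [<-|Ht]. apply join_l.
      eapply le_tr. apply FJ_ub. eauto. auto.
    + exists (max n N). apply bigjoin_least. intros t [<-|Ht].
      * eapply le_tr; [|apply join_r]. apply Hs. lia.
      * eapply le_tr. apply FJ_ub. eauto. eapply le_tr. apply HN. apply join_mono. apply le_refl.
        apply Hs. lia.
Qed.

Definition gcode (n : nat) : L := epsilon (inhabits one) (fun x => (exists y, f y = n) -> f x = n).

Lemma gcode_spec (y : L) : gcode (f y) = y.
Proof.
  apply Hf. unfold gcode.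
  pose proof (epsilon_spec (inhabits one) (fun x => (exists y0, f y0 = f y) -> f x = f y)) as H.
  apply H. exists y. intros _. reflexivity. exists y. reflexivity.
Qed.

Lemma mono_seq (s : nat -> L) : (forall n, le (s n) (s (S n))) -> forall n k, n <= k -> le (s n) (s k).
Proof.
  intros H n k Hnk. induction Hnk. apply le_refl. eapply le_tr; eauto.
Qed.

Lemma maximal_above (c : L) : c <> one ->
  exists m, le c m /\ m <> one /\ forall e, le m e -> e <> one -> e = m.
Proof.
  intros Hc.
  set (cs := fix cs n := match n with 0 => c | S n' =>
     if excluded_middle_informative (join L (cs n') (gcode n') = one) then cs n'
     else join L (cs n') (gcode n') end).
  assert (Hne : forall n, cs n <> one).
  { induction n; simpl; auto. destruct excluded_middle_informative; auto. }
  assert (Hst : forall n, le (cs n) (cs (S n))).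
  { intros n. simpl. destruct excluded_middle_informative. apply le_refl. apply join_l. }
  assert (Hmono := mono_seq cs Hst).
  set (m := bigjoin (fun z => exists n, z = cs n)).
  exists m. split; [|split].
  - apply bigjoin_ub. exists 0. reflexivity.
  - intros Em. destruct HC as [Hone _].
    assert (H1 : le one m) by (rewrite Em; apply le_refl).
    destruct (Hone _ H1) as [T [HT H2]].
    destruct (list_bound cs (zero L) Hmono T) as [N HN].
    { intros t Ht. right. apply HT. auto. }
    apply (Hne N). apply le_antisym. apply one_top. rewrite <- (join_zero_l (cs N)).
    eapply le_tr. apply H2. apply HN.
  - intros e Hme He. apply le_antisym; auto.
    assert (Hk : le e (cs (S (f e)))).
    { simpl. rewrite gcode_spec. destruct excluded_middle_informative as [E|E].
      - exfalso. apply He. rewrite <- E. apply le_antisym. apply join_r. apply join_lub; [|apply le_refl].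
        eapply le_tr; [|apply Hme]. apply bigjoin_ub. eauto.
      - apply join_r. }
    eapply le_tr. apply Hk. apply bigjoin_ub. eauto.
Qed.

End Main.

Section Case2.
Context {L : MultLattice} (Hdom : is_domain L) (HC : is_C_lattice L) (Hsh : sharp L)
  (Hpg : principally_generated L) (f : L -> nat) (Hf : forall x y, f x = f y -> x = y).

Lemma mul_bj_bj (S1 S2 : L -> Prop) :
  le (mul (bigjoin S1) (bigjoin S2)) (bigjoin (fun z => exists p q, S1 p /\ S2 q /\ z = mul p q)).
Proof.
  rewrite mul_bigjoin. apply bigjoin_least. intros z [b [Hb ->]].
  rewrite mulC, mul_bigjoin. apply bigjoin_least. intros z [a [Ha ->]].
  apply bigjoin_ub. exists a, b. rewrite mulC. auto.
Qed.

Lemma KL (m : L) : le m (mul m m) -> forall u, principal L u -> u <> zero L -> le u m ->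
  exists v v', principal L v /\ principal L v' /\ le v m /\ le v' m /\ u = mul v v'.
Proof.
  intros Hm u Hu Hu0 Hum.
  set (Sm := fun p => principal L p /\ le p m).
  assert (Em : bigjoin Sm = m) by (symmetry; apply (pg_max Hpg)).
  set (Prod := fun z => exists p q, Sm p /\ Sm q /\ z = mul p q).
  assert (H1 : le u (bigjoin Prod)).
  { eapply le_tr. apply Hum. eapply le_tr. apply Hm.
    assert (E2 : mul m m = mul (bigjoin Sm) (bigjoin Sm)) by (rewrite Em; reflexivity).
    rewrite E2. apply mul_bj_bj. }
  destruct (principal_compact Hdom HC u Hu Prod H1) as [T [HT HuT]].
  assert (HPQ : forall T, (forall t, In t T -> Prod t) -> exists P Q, Sm P /\ Sm Q /\ le (FJ T) (mul P Q)).
  { induction T0 as [|a T0 IH]; intros HT0.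
    - exists (zero L), (zero L). split; [|split].
      + split. apply principal_zero. apply zero_le.
      + split. apply principal_zero. apply zero_le.
      + apply bigjoin_least. intros t Ht; simpl in Ht; contradiction.
    - destruct IH as [P [Q [[HP HPm] [[HQ HQm] HPQ]]]]. { intros t Ht. apply HT0. right. auto. }
      destruct (HT0 a (or_introl eq_refl)) as [p [q [[Hp Hpm] [[Hq Hqm] ->]]]].
      exists (join L P p), (join L Q q). split; [|split].
      + split. apply (prufer Hdom Hsh); auto. apply join_lub; auto.
      + split. apply (prufer Hdom Hsh); auto. apply join_lub; auto.
      + apply bigjoin_least. intros t [<-|Ht].
        * apply mul_mono; apply join_r.
        * eapply le_tr. apply FJ_ub. eauto. eapply le_tr. apply HPQ. apply mul_mono; apply join_l. }
  destruct (HPQ T HT) as [P [Q [[HP HPm] [[HQ HQm] HTPQ]]]].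
  assert (HPQp : principal L (mul P Q)) by (apply principal_mul; auto).
  assert (Eu : u = mul (colon L u (mul P Q)) (mul P Q)) by (apply P_meet; auto; eapply le_tr; eauto).
  assert (Hr : principal L (colon L u (mul P Q))) by (eapply (factor Hdom u); eauto).
  exists P, (mul Q (colon L u (mul P Q))). split; [|split; [|split; [|split]]]; auto.
  - apply principal_mul; auto.
  - eapply le_tr. apply mul_le_l. auto.
  - rewrite Eu at 1. rewrite mulC, <- mulA. reflexivity.
Qed.

End Case2.

Section Case2b.
Context {L : MultLattice} (Hdom : is_domain L) (HC : is_C_lattice L) (Hsh : sharp L)
  (Hpg : principally_generated L) (f : L -> nat) (Hf : forall x y, f x = f y -> x = y).
Variable m : L.
Hypothesis Hm1 : m <> one.
Hypothesis Hm0 : m <> zero L.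
Hypothesis Hmm : le m (mul m m).

Definition KLP (u : L) (vv : L * L) : Prop :=
  principal L (fst vv) /\ principal L (snd vv) /\ le (fst vv) m /\ le (snd vv) m /\ u = mul (fst vv) (snd vv).

Definition kl (u : L) : L * L := epsilon (inhabits (one, one)) (KLP u).

Lemma kl_spec (u : L) : principal L u -> u <> zero L -> le u m -> KLP u (kl u).
Proof.
  intros. unfold kl. apply epsilon_spec.
  destruct (KL Hdom HC Hsh Hpg f Hf m Hmm u) as [v [v' Hvv]]; auto. exists (v, v'). exact Hvv.
Qed.

Definition Inv (st : L * L) : Prop :=
  principal L (fst st) /\ fst st <> zero L /\ principal L (snd st) /\ snd st <> zero L /\ le (snd st) m.

Definition step (b : bool) (st : L * L) : L * L :=
  let B := fst st in let u := snd st in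
  let v1 := fst (kl u) in let r := snd (kl u) in
  let v2 := fst (kl r) in let v3 := snd (kl r) in
  if b then (B, v1) else (mul (mul B v1) v2, v3).

Definition lower (st : L * L) : L := mul (fst st) (snd st).

Lemma step_facts (st : L * L) : Inv st ->
  let B := fst st in let u := snd st in
  let v1 := fst (kl u) in let r := snd (kl u) in
  let v2 := fst (kl r) in let v3 := snd (kl r) in
  principal L v1 /\ principal L v2 /\ principal L v3 /\ v1 <> zero L /\ v2 <> zero L /\ v3 <> zero L
  /\ le v1 m /\ le v2 m /\ le v3 m /\ u = mul v1 (mul v2 v3) /\ principal L r.
Proof.
  intros [HB [HB0 [Hu [Hu0 Hum]]]]. simpl.
  destruct (kl_spec (snd st) Hu Hu0 Hum) as [Hv1 [Hr [Hv1m [Hrm Eu]]]].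
  assert (Hr0 : snd (kl (snd st)) <> zero L) by (intros E; apply Hu0; rewrite Eu, E; apply mul_zero).
  assert (Hv10 : fst (kl (snd st)) <> zero L) by (intros E; apply Hu0; rewrite Eu, E; apply mul_zero_l).
  destruct (kl_spec (snd (kl (snd st))) Hr Hr0 Hrm) as [Hv2 [Hv3 [Hv2m [Hv3m Er]]]].
  assert (Hv30 : snd (kl (snd (kl (snd st)))) <> zero L) by (intros E; apply Hr0; rewrite Er, E; apply mul_zero).
  assert (Hv20 : fst (kl (snd (kl (snd st)))) <> zero L) by (intros E; apply Hr0; rewrite Er, E; apply mul_zero_l).
  refine (conj Hv1 (conj Hv2 (conj Hv3 (conj Hv10 (conj Hv20 (conj Hv30 (conj Hv1m (conj Hv2m (conj Hv3m (conj _ Hr)))))))))).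
  rewrite <- Er. exact Eu.
Qed.

Lemma step_inv (b : bool) (st : L * L) : Inv st -> Inv (step b st).
Proof.
  intros HI. pose proof (step_facts st HI) as H. simpl in H.
  destruct H as [Hv1 [Hv2 [Hv3 [Hv10 [Hv20 [Hv30 [Hv1m [Hv2m [Hv3m [Eu Hr]]]]]]]]]].
  destruct HI as [HB [HB0 _]].
  unfold step, Inv. destruct b; simpl.
  - refine (conj HB (conj HB0 (conj Hv1 (conj Hv10 Hv1m)))).
  - refine (conj _ (conj _ (conj Hv3 (conj Hv30 Hv3m)))).
    apply principal_mul; auto. apply principal_mul; auto.
    apply mul_ne0; auto. apply mul_ne0; auto.
Qed.

Lemma step_lower (b : bool) (st : L * L) : Inv st -> le (lower st) (lower (step b st)).
Proof.
  intros HI. pose proof (step_facts st HI) as H. simpl in H.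
  destruct H as [Hv1 [Hv2 [Hv3 [Hv10 [Hv20 [Hv30 [Hv1m [Hv2m [Hv3m [Eu Hr]]]]]]]]]].
  unfold step, lower. destruct b; simpl.
  - apply mul_mono_r. rewrite Eu at 1. apply mul_le_l.
  - rewrite Eu at 1. rewrite !mulA. apply le_refl.
Qed.

Lemma step_top (b : bool) (st : L * L) : le (fst (step b st)) (fst st).
Proof.
  unfold step. destruct b; simpl. apply le_refl. eapply le_tr; apply mul_le_l.
Qed.

Fixpoint path (u0 : L) (s : nat -> bool) (n : nat) : L * L :=
  match n with 0 => (one, u0) | S n' => step (s n') (path u0 s n') end.

Definition Ejoin (u0 : L) (s : nat -> bool) : L := bigjoin (fun z => exists n, z = lower (path u0 s n)).

Lemma case2_false : False.
Proof.
  destruct (nonzero_principal Hpg m Hm0) as [u0 [Hu0 [Hu00 Hu0m]]].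
  assert (HI0 : Inv (one, u0)).
  { refine (conj principal_one (conj (one_ne_zero Hdom) (conj Hu0 (conj Hu00 Hu0m)))). }
  assert (HIp : forall s n, Inv (path u0 s n)).
  { intros s n. induction n; simpl; auto. apply step_inv; auto. }
  assert (Hlow : forall s n k, n <= k -> le (lower (path u0 s n)) (lower (path u0 s k))).
  { intros s. apply mono_seq. intros n. simpl. apply step_lower. auto. }
  assert (Htop : forall s n k, n <= k -> le (fst (path u0 s k)) (fst (path u0 s n))).
  { intros s n k Hnk. induction Hnk. apply le_refl. eapply le_tr; [|apply IHHnk]. simpl. apply step_top. }
  assert (Hbound : forall s j, le (Ejoin u0 s) (fst (path u0 s j))).
  { intros s j. apply bigjoin_least. intros z [k ->].
    destruct (Compare_dec.le_ge_dec k j).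
    - eapply le_tr. apply Hlow. eauto. apply mul_le_l.
    - eapply le_tr. apply mul_le_l. apply Htop. lia. }
  assert (Hsep : forall st, Inv st -> le (lower (step true st)) (fst (step false st)) -> False).
  { intros st HI Hle. pose proof (step_facts st HI) as H. simpl in H.
    destruct H as [Hv1 [Hv2 [Hv3 [Hv10 [Hv20 [Hv30 [Hv1m [Hv2m [Hv3m [Eu Hr]]]]]]]]]].
    destruct HI as [HB [HB0 _]]. unfold step, lower in Hle. simpl in Hle.
    apply Hm1. apply le_antisym. apply one_top.
    eapply le_tr; [|apply Hv2m].
    apply (cancel Hdom (mul (fst st) (fst (kl (snd st))))).
    apply principal_mul; auto. apply mul_ne0; auto.
    rewrite mul1l. rewrite (mulC _ (fst (kl (snd (kl (snd st)))))). exact Hle. }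
  assert (Hinj : forall s t, Ejoin u0 s = Ejoin u0 t -> s = t).
  { intros s t E. apply functional_extensionality.
    assert (Hall : forall n k, k < n -> s k = t k).
    { induction n; intros k Hk. lia.
      assert (Hp : forall j, j <= n -> path u0 s j = path u0 t j).
      { induction j; intros Hj. reflexivity. simpl. rewrite IHj by lia. rewrite (IHn j) by lia. reflexivity. }
      destruct (PeanoNat.Nat.eq_dec k n) as [->|Hkn]; [|apply IHn; lia].
      assert (Hpn := Hp n (le_n n)).
      destruct (s n) eqn:Es; destruct (t n) eqn:Et; auto; exfalso.
      - apply (Hsep (path u0 s n)); auto.
        apply le_tr with (Ejoin u0 s).
        + apply bigjoin_ub. exists (S n). simpl. rewrite Es. reflexivity.
        + rewrite E. eapply le_tr. apply (Hbound t (S n)). simpl. rewrite Et, <- Hpn. apply le_refl.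
      - apply (Hsep (path u0 t n)); auto.
        apply le_tr with (Ejoin u0 t).
        + apply bigjoin_ub. exists (S n). simpl. rewrite Et. reflexivity.
        + rewrite <- E. eapply le_tr. apply (Hbound s (S n)). simpl. rewrite Es, Hpn. apply le_refl. }
    intros n. apply (Hall (S n)). lia. }
  apply (cantor (fun s => f (Ejoin u0 s))). intros s t E. apply Hinj. apply Hf. auto.
Qed.

End Case2b.

Section Case1.
Context {L : MultLattice} (Hdom : is_domain L) (HC : is_C_lattice L) (Hsh : sharp L)
  (Hpg : principally_generated L) (f : L -> nat) (Hf : forall x y, f x = f y -> x = y).
Variable m : L.
Hypothesis Hm1 : m <> one.
Hypothesis Hmax : forall e, le m e -> e <> one -> e = m.
Hypothesis HU : forall z, principal L z -> le m z -> z = one.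
Variable w : L.
Hypothesis Hw : principal L w.
Hypothesis Hwm : le w m.
Hypothesis Hwmm : ~ le w (mul m m).

Definition Sm (p : L) : Prop := principal L p /\ le p m.

Definition ecode (n : nat) : L :=
  epsilon (inhabits (zero L)) (fun x => Sm x /\ ((exists y, f y = n /\ Sm y) -> f x = n)).

Lemma ecode_spec (n : nat) : Sm (ecode n) /\ ((exists y, f y = n /\ Sm y) -> f (ecode n) = n).
Proof.
  unfold ecode. apply epsilon_spec.
  destruct (classic (exists y, f y = n /\ Sm y)) as [[y [Hy HSy]]|Hn].
  - exists y. split; auto.
  - exists (zero L). split. split. apply principal_zero. apply zero_le. intros H; contradiction.
Qed.

Lemma ecode_eq (q : L) : Sm q -> ecode (f q) = q.
Proof.
  intros Hq. apply Hf. apply (proj2 (ecode_spec (f q))). eauto.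
Qed.

Definition sf (z : L) : L := epsilon (inhabits (zero L)) (fun q => Sm q /\ ~ le q z).

Lemma sf_spec (z : L) : principal L z -> le z m -> Sm (sf z) /\ ~ le (sf z) z.
Proof.
  intros Hz Hzm. unfold sf. apply epsilon_spec.
  apply NNPP. intros Hn. apply Hm1. apply HU.
  - assert (E : m = z).
    { apply le_antisym; auto. rewrite (pg_max Hpg m). apply bigjoin_least.
      intros p Hp. apply NNPP. intros Hpz. apply Hn. exists p. split; auto. }
    rewrite E. auto.
  - apply le_refl.
Qed.

Fixpoint wseq (n : nat) : L :=
  match n with 0 => w | S n' => join L (join L (wseq n') (ecode n')) (sf (join L (wseq n') (ecode n'))) end.

Lemma wseq_Sm (n : nat) : Sm (wseq n).
Proof.
  induction n; simpl. split; auto.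
  destruct IHn as [H1 H2]. destruct (ecode_spec n) as [[H3 H4] _].
  assert (Hz : Sm (join L (wseq n) (ecode n))).
  { split. apply (prufer Hdom Hsh); auto. apply join_lub; auto. }
  destruct Hz as [Hz1 Hz2]. destruct (sf_spec _ Hz1 Hz2) as [[H5 H6] _].
  split. apply (prufer Hdom Hsh); auto. apply join_lub; auto.
Qed.

Lemma wseq_step (n : nat) : le (wseq n) (wseq (S n)).
Proof. simpl. eapply le_tr; apply join_l. Qed.

Lemma wseq_mono : forall n k, n <= k -> le (wseq n) (wseq k).
Proof. apply mono_seq. apply wseq_step. Qed.

Lemma wseq_strict (n : nat) : ~ le (wseq (S n)) (wseq n).
Proof.
  intros H. destruct (wseq_Sm n) as [H1 H2]. destruct (ecode_spec n) as [[H3 H4] _].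
  assert (Hz1 : principal L (join L (wseq n) (ecode n))) by (apply (prufer Hdom Hsh); auto).
  assert (Hz2 : le (join L (wseq n) (ecode n)) m) by (apply join_lub; auto).
  destruct (sf_spec _ Hz1 Hz2) as [_ H5]. apply H5.
  eapply le_tr; [|apply join_l]. eapply le_tr; [|apply H]. simpl. apply join_r.
Qed.

Lemma w_ne0 : w <> zero L.
Proof. intros E. apply Hwmm. rewrite E. apply zero_le. Qed.

Lemma wseq_ne0 (n : nat) : wseq n <> zero L.
Proof.
  intros E. apply w_ne0. apply le_zero. rewrite <- E. apply (wseq_mono 0). lia.
Qed.

Lemma m_cover : le m (bigjoin (fun z => exists n, z = wseq n)).
Proof.
  rewrite (pg_max Hpg m) at 1. apply bigjoin_least. intros q Hq.
  eapply le_tr; [|apply bigjoin_ub; exists (S (f q)); reflexivity].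
  simpl. eapply le_tr; [|apply join_l]. eapply le_tr; [|apply join_r].
  rewrite ecode_eq; auto. apply le_refl.
Qed.

Definition tt (n : nat) : L := colon L w (wseq n).
Definition PP (n : nat) : L := meet L (tt n) (wseq (S n)).

Lemma PP_prod (i j : nat) : i < j -> le (mul (PP i) (PP j)) w.
Proof.
  intros Hij. eapply le_tr. apply mul_mono.
  - eapply le_tr. apply meet_r. apply wseq_mono. exact Hij.
  - apply meet_l.
  - unfold tt. rewrite mulC. apply colon_mul.
Qed.

Lemma PP_not_le (n : nat) : le (PP n) w -> False.
Proof.
  intros Hle.
  destruct (wseq_Sm n) as [HW0 HW0m]. destruct (wseq_Sm (S n)) as [HW1 HW1m].
  assert (E1 : PP n = mul (colon L (tt n) (wseq (S n))) (wseq (S n))).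
  { unfold PP. destruct (HW1 (tt n) one) as [H _]. rewrite mul1l, meet_one in H. exact H. }
  assert (Ew : w = mul (tt n) (wseq n)).
  { unfold tt. apply P_meet; auto. apply (wseq_mono 0). lia. }
  assert (E0 : wseq n = mul (colon L (wseq n) (wseq (S n))) (wseq (S n))).
  { apply P_meet; auto. apply wseq_step. }
  assert (Ht : principal L (tt n)) by (apply (factor Hdom w (tt n) (wseq n)); auto; apply w_ne0).
  assert (Ht0 : tt n <> zero L).
  { intros E. apply w_ne0. rewrite Ew, E. apply mul_zero_l. }
  set (s := colon L (wseq n) (wseq (S n))) in *.
  assert (H1 : le (colon L (tt n) (wseq (S n))) (mul (tt n) s)).
  { apply (cancel Hdom (wseq (S n))); auto. apply wseq_ne0.
    rewrite <- E1. eapply le_tr. apply Hle. rewrite Ew at 1. rewrite E0 at 1. rewrite mulA. apply le_refl. }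
  assert (H2 : le one s).
  { apply (cancel Hdom (tt n)); auto. rewrite mul1l, mulC. eapply le_tr; [|apply H1]. apply colon_ge. }
  apply (wseq_strict n). rewrite E0. assert (s = one) as -> by (apply le_antisym; auto; apply one_top).
  rewrite mul1l. apply le_refl.
Qed.

Lemma key (X Y : L) (g : nat -> nat) : le (mul X Y) w -> ~ le Y m -> (forall n, n <= g n) ->
  (forall n, le (PP (g n)) X) -> False.
Proof.
  intros HXY HYm Hg HP.
  assert (HJ : join L Y m = one).
  { apply NNPP. intros Hn. apply HYm. rewrite <- (Hmax (join L Y m)); auto. apply join_l. apply join_r. }
  set (U := fun z => z = Y \/ exists n, z = wseq n).
  assert (H1 : le one (bigjoin U)).
  { rewrite <- HJ. apply join_lub. apply bigjoin_ub. left. reflexivity.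
    eapply le_tr. apply m_cover. apply bigjoin_least. intros z Hz. apply bigjoin_ub. right. auto. }
  destruct HC as [Hone _]. destruct (Hone _ H1) as [T [HT H2]].
  destruct (list_bound wseq Y wseq_mono T) as [N HN]. { intros t Ht. apply HT. auto. }
  apply (PP_not_le (g N)).
  rewrite <- (mul1 _ (PP (g N))). eapply le_tr. apply mul_mono_r. eapply le_tr. apply H2. apply HN.
  rewrite mul_join. apply join_lub.
  - eapply le_tr; [|apply HXY]. apply mul_mono_l. auto.
  - eapply le_tr. apply mul_mono. apply meet_l. apply wseq_mono. apply Hg.
    unfold tt. apply colon_mul.
Qed.

Lemma case1_false : False.
Proof.
  set (B := bigjoin (fun z => exists n, z = PP (2 * n))).
  set (C := bigjoin (fun z => exists n, z = PP (2 * n + 1))).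
  assert (HBC : le (mul B C) w).
  { eapply le_tr. apply (mul_bj_bj f Hf). apply bigjoin_least. intros z [p [q [[a ->] [[b ->] ->]]]].
    destruct (Compare_dec.lt_dec (2 * a) (2 * b + 1)).
    - apply PP_prod; auto.
    - rewrite mulC. apply PP_prod. lia. }
  destruct (Hsh B C w HBC) as [B' [C' [HB [HCC E]]]].
  destruct (classic (le C' m)) as [HCm|HCm].
  - assert (HBm : ~ le B' m).
    { intros HBm. apply Hwmm. rewrite E. apply mul_mono; auto. }
    apply (key C' B' (fun n => 2 * n + 1)).
    + rewrite mulC, <- E. apply le_refl.
    + auto.
    + intros; lia.
    + intros n. eapply le_tr; [|apply HCC]. apply bigjoin_ub. eauto.
  - apply (key B' C' (fun n => 2 * n)).
    + rewrite <- E. apply le_refl.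
    + auto.
    + intros; lia.
    + intros n. eapply le_tr; [|apply HB]. apply bigjoin_ub. eauto.
Qed.

End Case1.

Theorem corollary3p15 (L : MultLattice) :
  countable_lattice L -> is_C_lattice L -> is_domain L ->
  principally_generated L -> sharp L -> dedekind_lattice L.
Proof.
  intros [f Hf] HC Hdom Hpg Hsh x.
  destruct (classic (principal L x)) as [|Hx]; auto. exfalso.
  assert (Hx0 : x <> zero L) by (intros ->; apply Hx; apply principal_zero).
  destruct (nonzero_principal Hpg x Hx0) as [x0 [Hx0p [Hx00 Hx0x]]].
  destruct (least_principal Hdom Hsh x x0 Hx0p Hx00 Hx0x) as [b1 [Hb1 [Hb10 [Hxb1 Hleast]]]].
  set (c := colon L x b1).
  assert (Ex : x = mul c b1) by (apply P_meet; auto).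
  assert (HUc : forall z, principal L z -> le c z -> z = one).
  { intros z Hz Hcz. apply le_antisym. apply one_top.
    assert (le b1 (mul b1 z)).
    { apply Hleast. apply principal_mul; auto. rewrite Ex at 1. rewrite mulC. apply mul_mono_r. auto. }
    apply (cancel Hdom b1); auto. rewrite mul1l, mulC. auto. }
  assert (Hc1 : c <> one).
  { intros E. apply Hx. rewrite Ex, E, mul1l. auto. }
  assert (Hc0 : c <> zero L).
  { intros E. apply Hx0. rewrite Ex, E. apply mul_zero_l. }
  destruct (maximal_above HC f Hf c Hc1) as [m [Hcm [Hm1 Hmax]]].
  assert (HUm : forall z, principal L z -> le m z -> z = one).
  { intros z Hz Hmz. apply HUc; auto. eapply le_tr; eauto. }
  assert (Hm0 : m <> zero L).
  { intros E. apply Hc0. apply le_zero. rewrite <- E. auto. }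
  destruct (classic (exists w, principal L w /\ le w m /\ ~ le w (mul m m))) as [[w [Hw [Hwm Hwmm]]]|Hn].
  - exact (case1_false Hdom HC Hsh Hpg f Hf m Hm1 Hmax HUm w Hw Hwm Hwmm).
  - apply (case2_false Hdom HC Hsh Hpg f Hf m Hm1 Hm0).
    rewrite (pg_max Hpg m) at 1. apply bigjoin_least. intros p [Hp Hpm].
    apply NNPP. intros Hpmm. apply Hn. exists p. auto.
Qed.
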